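(* For any instance of the Max-Cut problem on a graph with $n$ vertices, the DLA of QWOA satisfies $\dim(\mathfrak g_{\mathrm{QWOA,Max\text{-}Cut}})=\mathcal O(n^4)$.
   Context: Max-Cut on an undirected simple graph $G=(V,E)$, $V=\{1,\dots,n\}$: feasible solutions are all $z\in\{0,1\}^n$ and the cost $C(z)$ is the number of edges $\{u,v\}$ with $z_u\ne z_v$. On $\mathbb C^{2^n}$, $H_C$ is diagonal with $H_C|z\rangle=C(z)|z\rangle$ and $H_M$ is the $2^n\times 2^n$ all-ones matrix (equivalent up to identity to the complete-graph adjacency matrix). $\mathfrak g_{\mathrm{QWOA,Max\text{-}Cut}}$ is the real Lie algebra generated by $iH_C$ and $iH_M$ (smallest real subspace containing them and closed under commutators); its dimension is its real dimension. *)

(* Defs.v *)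
From HB Require Import structures.
From mathcomp Require Import all_boot all_order all_algebra all_field.
Set Implicit Arguments. Unset Strict Implicit. Unset Printing Implicit Defensive.
Import Order.TTheory GRing.Theory Num.Theory.
Local Open Scope ring_scope.

Definition simple_graph (n : nat) (e : rel 'I_n) : Prop :=
  (forall u v, e u v = e v u) /\ (forall u, e u u = false).

(* Basis index i : 'I_(2^n) encodes the bit string z with z_u = bit u of i. *)
Definition bit_of (n : nat) (i : 'I_(2 ^ n)) (u : 'I_n) : bool :=
  odd (i %/ 2 ^ u).

Definition cut_cost (n : nat) (e : rel 'I_n) (z : 'I_n -> bool) : nat :=
  #|[set p : 'I_n * 'I_n | (p.1 < p.2)%N && e p.1 p.2 && (z p.1 != z p.2)]|.

Definition H_C (n : nat) (e : rel 'I_n) : 'M[algC]_(2 ^ n) :=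
  \matrix_(i, j) (if i == j then (cut_cost e (bit_of i))%:R else 0).

Definition H_M (n : nat) : 'M[algC]_(2 ^ n) := const_mx 1.

Definition lie_bracket (m : nat) (A B : 'M[algC]_m) : 'M[algC]_m :=
  A *m B - B *m A.

Definition real_lie_closed (m : nat) (P : 'M[algC]_m -> Prop) : Prop :=
  P 0 /\
  (forall A B, P A -> P B -> P (A + B)) /\
  (forall (c : algC) A, c \is Num.real -> P A -> P (c *: A)) /\
  (forall A B, P A -> P B -> P (lie_bracket A B)).

Definition lie_generated (m : nat) (S : 'M[algC]_m -> Prop) (A : 'M[algC]_m)
  : Prop :=
  forall P : 'M[algC]_m -> Prop,
    real_lie_closed P -> (forall X, S X -> P X) -> P A.

Definition real_lin_indep (m k : nat) (v : 'I_k -> 'M[algC]_m) : Prop :=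
  forall c : 'I_k -> algC, (forall i, c i \is Num.real) ->
    \sum_(i < k) c i *: v i = 0 -> forall i, c i = 0.

Definition real_dim_le (m : nat) (L : 'M[algC]_m -> Prop) (d : nat) : Prop :=
  forall k (v : 'I_k -> 'M[algC]_m),
    (forall i, L (v i)) -> real_lin_indep v -> (k <= d)%N.

Definition g_QWOA_MaxCut (n : nat) (e : rel 'I_n) : 'M[algC]_(2 ^ n) -> Prop :=
  lie_generated (fun X => X = 'i *: H_C e \/ X = 'i *: H_M n).

(* Main.v *)
Require Import Defs.
From mathcomp Require Import all_boot all_order all_algebra all_field.
From mathcomp Require Import ring zify.
From Stdlib Require Import ClassicalEpsilon.
Set Implicit Arguments. Unset Strict Implicit. Unset Printing Implicit Defensive.
Import Order.TTheory GRing.Theory Num.Theory.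
Local Open Scope ring_scope.

Lemma dim_bound (k D : nat) (w : 'I_k -> 'rV[algC]_D) :
  (forall x : 'I_k -> algC, (forall i, x i \is Num.real) ->
     \sum_i x i *: w i = 0 -> forall i, x i = 0) -> (k <= D + D)%N.
Proof.
move=> Hw.
pose R : 'M[algC]_(k, D + D) :=
  \matrix_(i, j) row_mx (map_mx (fun z => 'Re z) (w i)) (map_mx (fun z => 'Im z) (w i)) 0 j.
have key : forall u : 'rV_k, u *m R = 0 -> u = 0.
  move=> u Hu.
  have Hc : forall j, \sum_i u 0 i * R i j = 0.
    by move=> j; have := congr1 (fun M : 'rV_(D + D) => M 0 j) Hu; rewrite !mxE.
  have Rreal : forall i j, R i j \is Num.real.
    move=> i j; rewrite !mxE; case: split => a; rewrite ?mxE; [exact: Creal_Re | exact: Creal_Im].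
  have HRe : forall j : 'I_(D + D), \sum_i 'Re (u 0 i) * R i j = 0.
    move=> j; transitivity ('Re (\sum_i u 0 i * R i j)); last by rewrite Hc raddf0.
    by rewrite raddf_sum; apply: eq_bigr => i _ /=; rewrite ReMr // Rreal.
  have HIm : forall j : 'I_(D + D), \sum_i 'Im (u 0 i) * R i j = 0.
    move=> j; transitivity ('Im (\sum_i u 0 i * R i j)); last by rewrite Hc raddf0.
    by rewrite raddf_sum; apply: eq_bigr => i _ /=; rewrite ImMr // Rreal.
  have gen : forall x : 'I_k -> algC, (forall i, x i \is Num.real) ->
      (forall j : 'I_(D + D), \sum_i x i * R i j = 0) -> forall i, x i = 0.
    move=> x xr Hx; apply: Hw => //.
    apply/matrixP => a b; rewrite summxE mxE ord1.
    transitivity (\sum_i x i * R i (lshift D b) + 'i * \sum_i x i * R i (rshift D b)).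
      rewrite mulr_sumr -big_split /=; apply: eq_bigr => i _.
      rewrite !mxE (unsplitK (inl b) : split (lshift D b) = inl _) (unsplitK (inr b) : split (rshift D b) = inr _) /= ?mxE mulrCA -mulrDr -Crect //.
    by rewrite !Hx mulr0 addr0.
  apply/rowP => i; rewrite mxE (Crect (u 0 i)).
  rewrite (gen _ (fun i => Creal_Re _) HRe) (gen _ (fun i => Creal_Im _) HIm).
  by rewrite mulr0 addr0.
have rf : row_free R.
  rewrite -kermx_eq0; apply/eqP/row_matrixP => i; rewrite row0.
  apply: key; apply/sub_kermxP; exact: row_sub.
by move/eqP: rf => <-; exact: rank_leq_col.
Qed.

Section S.
Variables (n : nat) (e : rel 'I_n).
Let K := (n * n).+1.
Let cost (i : 'I_(2 ^ n)) : nat := cut_cost e (bit_of i).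

Lemma cost_lt i : (cost i < K)%N.
Proof.
rewrite ltnS /cost /cut_cost.
by apply: leq_trans (max_card _) _; rewrite card_prod card_ord.
Qed.

Definition UU : 'M[algC]_(2 ^ n, K) := \matrix_(i, c) ((cost i == c)%:R).
Definition Lam : 'M[algC]_K := diag_mx (\row_(c < K) (c : nat)%:R).

Lemma HC_diag : H_C e = diag_mx (\row_i (cost i)%:R).
Proof. by apply/matrixP => i j; rewrite !mxE eq_sym; case: eqP => // ->. Qed.

Lemma HU : H_C e *m UU = UU *m Lam.
Proof.
rewrite HC_diag mul_diag_mx mul_mx_diag; apply/matrixP => i c; rewrite !mxE.
by case: eqP => [<-|]; rewrite ?mulr1 ?mul1r ?mulr0 ?mul0r.
Qed.

Lemma UH : UU^T *m H_C e = Lam *m UU^T.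
Proof.
have := congr1 trmx HU; rewrite !trmx_mul.
rewrite {1}HC_diag {2}/Lam !tr_diag_mx -HC_diag => <- //.
Qed.

Lemma row_sum i : \sum_(c < K) UU i c = 1.
Proof.
rewrite (bigD1 (Ordinal (cost_lt i))) //= big1 ?addr0; first by rewrite mxE eqxx.
by move=> c /eqP Hc; rewrite mxE; case: eqP => // Hc'; case: Hc; apply: val_inj.
Qed.

Lemma UJU : UU *m const_mx 1 *m UU^T = H_M n.
Proof.
apply/matrixP => i j; rewrite [LHS]mxE [RHS]mxE.
transitivity (\sum_d UU j d); last exact: row_sum.
apply: eq_bigr => d _.
have -> : (UU *m const_mx 1) i d = 1.
  rewrite mxE; transitivity (\sum_c UU i c); last exact: row_sum.
  by apply: eq_bigr => c _; rewrite [X in _ * X]mxE mulr1.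
by rewrite mul1r mxE.
Qed.

Definition SS (X : 'M[algC]_(2 ^ n)) : Prop :=
  exists p : algC * 'M[algC]_K, X = p.1 *: H_C e + UU *m p.2 *m UU^T.

Lemma SS_closed : real_lie_closed SS.
Proof.
split; [|split; [|split]].
- by exists (0, 0); rewrite /= scale0r mulmx0 mul0mx addr0.
- move=> A B [[a Ba] ->] [[b Bb] ->]; exists (a + b, Ba + Bb) => /=.
  rewrite scalerDl mulmxDr mulmxDl; apply/matrixP => i j; rewrite !mxE.
  by rewrite addrACA.
- move=> c A _ [[a Ba] ->]; exists (c * a, c *: Ba) => /=.
  by rewrite scalerDr scalerA -!mulmxA -scalemxAl scalemxAr.
- move=> A B [[a Ba] ->] [[b Bb] ->].
  exists (0, a *: (Lam *m Bb - Bb *m Lam) - b *: (Lam *m Ba - Ba *m Lam)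
             + (Ba *m (UU^T *m UU) *m Bb - Bb *m (UU^T *m UU) *m Ba)) => /=.
  have L1 : forall T, H_C e *m (UU *m T *m UU^T) = UU *m (Lam *m T) *m UU^T.
    by move=> T; rewrite !mulmxA HU.
  have L2 : forall T, (UU *m T *m UU^T) *m H_C e = UU *m (T *m Lam) *m UU^T.
    by move=> T; rewrite -!mulmxA UH.
  have L3 : forall T T', (UU *m T *m UU^T) *m (UU *m T' *m UU^T)
            = UU *m (T *m (UU^T *m UU) *m T') *m UU^T.
    by move=> T T'; rewrite !mulmxA.
  have sAl : forall m1 m2 m3 (c : algC) (X : 'M[algC]_(m1, m2)) (Y : 'M[algC]_(m2, m3)),
      (c *: X) *m Y = c *: (X *m Y) by move=> *; rewrite scalemxAl.
  rewrite /lie_bracket !(mulmxDl, mulmxDr, mulmxBl, mulmxBr).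
  rewrite -?scalemxAl -?scalemxAr -?scalemxAl -?scalemxAr L1 L2 !L3 !L1 !L2.
  rewrite scale0r add0r !(scalerDr, scalerBr, scalerN).
  rewrite !(mulmxDl, mulmxDr, mulmxBl, mulmxBr, mulmxN, mulNmx).
  rewrite -?scalemxAl -?scalemxAr -?scalemxAl -?scalemxAr -?scalemxAl -?scalemxAr.
  move: (H_C e *m H_C e) (UU *m (Lam *m Ba) *m UU^T) (UU *m (Ba *m Lam) *m UU^T)
        (UU *m (Lam *m Bb) *m UU^T) (UU *m (Bb *m Lam) *m UU^T)
        (UU *m (Ba *m (UU^T *m UU) *m Bb) *m UU^T) (UU *m (Bb *m (UU^T *m UU) *m Ba) *m UU^T).
  move=> p0 p1 p2 p3 p4 p5 p6.
  apply/matrixP => i j; rewrite !mxE.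
  ring.
Qed.

Lemma L_sub_SS X : g_QWOA_MaxCut e X -> SS X.
Proof.
move=> HX; apply: HX; first exact: SS_closed.
move=> Y [->|->].
  by exists ('i, 0); rewrite /= mulmx0 mul0mx addr0.
exists (0, 'i *: const_mx 1); rewrite /= scale0r add0r.
by rewrite -scalemxAr -scalemxAl UJU.
Qed.

Lemma dimSS k (v : 'I_k -> 'M[algC]_(2 ^ n)) :
  (forall i, SS (v i)) -> real_lin_indep v -> (k <= (1 + K * K) + (1 + K * K))%N.
Proof.
move=> Hv Hind.
pose p i := proj1_sig (constructive_indefinite_description _ (Hv i)).
have Hp i : v i = (p i).1 *: H_C e + UU *m (p i).2 *m UU^T :=
  proj2_sig (constructive_indefinite_description _ (Hv i)).
apply: (@dim_bound k (1 + K * K) (fun i => row_mx (\row_(_ < 1) (p i).1) (mxvec (p i).2))).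
move=> x xr Hs; apply: Hind => //.
have Ha : \sum_i x i * (p i).1 = 0.
  apply: etrans (_ : _ = (\sum_i x i *: row_mx (\row_(_ < 1) (p i).1) (mxvec (p i).2)) 0 (lshift (K * K) 0)) _;
    last by rewrite Hs mxE.
  rewrite summxE; apply: eq_bigr => i _.
  by rewrite !mxE (unsplitK (inl 0) : split (lshift (K * K) (0 : 'I_1)) = inl _) /= mxE.
have Hb : \sum_i x i *: (p i).2 = 0.
  apply/matrixP => r c.
  apply: etrans (_ : _ = (\sum_i x i *: row_mx (\row_(_ < 1) (p i).1) (mxvec (p i).2)) 0 (rshift 1 (mxvec_index r c))) _;
    last by rewrite Hs !mxE.
  rewrite !summxE; apply: eq_bigr => i _.
  rewrite mxE [RHS]mxE row_mxEr.
  by rewrite mxvecE.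
transitivity ((\sum_i x i * (p i).1) *: H_C e + UU *m (\sum_i x i *: (p i).2) *m UU^T);
  last by rewrite Ha Hb scale0r add0r mulmx0 mul0mx.
under eq_bigr do rewrite Hp scalerDr scalerA.
rewrite big_split /= -scaler_suml; congr (_ + _).
rewrite mulmx_sumr mulmx_suml; apply: eq_bigr => i _.
by rewrite -scalemxAr -scalemxAl.
Qed.
End S.

Theorem corollary3 :
  exists (C N : nat), forall n : nat, (N <= n)%N ->
    forall e : rel 'I_n, simple_graph e ->
      real_dim_le (g_QWOA_MaxCut e) (C * n ^ 4).
Proof.
exists 10%N, 1%N => n n1 e _ k v Lv Hind.
apply: leq_trans (dimSS (fun i => L_sub_SS (Lv i)) Hind) _.
have -> : (n ^ 4 = n * n * (n * n))%N by rewrite !expnS expn0 muln1 !mulnA.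
set m := (n * n)%N.
have m1 : (1 <= m)%N by rewrite /m muln_gt0 n1.
nia.
Qed.
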